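(* Let $0<q<1$. Define the $q$-Hermite polynomials $H_{n,q}(x)$ by \[ H_q(t)\,e_q(tx)=\sum_{n=0}^\infty H_{n,q}(x)\frac{t^n}{[n]_q!},\qquad H_q(t)=\sum_{n=0}^\infty(-1)^nq^{n(n-1)}\frac{t^{2n}}{[2n]_q!!}. \] Then for every integer $n\ge0$, $H_{n,q}(x)$ satisfies the $q$-difference equation \[ q^{n-2}D_{q,x}^2H_{n,q}(x)-xq^nD_{q,x}H_{n,q}(x)+[n]_qH_{n,q}(qx)=0. \]
   Context: $[n]_q=\frac{1-q^n}{1-q}$, $[0]_q!=1$, $[n]_q!=[n]_q\cdots[1]_q$, $[0]_q!!=1$, $[2n]_q!!=[2n]_q[2n-2]_q\cdots[2]_q$, $e_q(t)=\sum_{n\ge0}\frac{t^n}{[n]_q!}$. The $q$-derivative is $D_{q,x}f(x)=\frac{f(qx)-f(x)}{(q-1)x}$ (on polynomials $D_{q,x}x^n=[n]_qx^{n-1}$), and $D_{q,x}^2=D_{q,x}\circ D_{q,x}$. *)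

(* Defs.v *)
From HB Require Import structures.
From mathcomp Require Import all_boot all_order all_algebra.
Set Implicit Arguments. Unset Strict Implicit. Unset Printing Implicit Defensive.
Import Order.TTheory GRing.Theory Num.Theory.
Local Open Scope ring_scope.

Section QDefs.
Variable R : realFieldType.
Variable q : R.

Definition qint (n : nat) : R := (1 - q ^+ n) / (1 - q).

Definition qfact (n : nat) : R := \prod_(i < n) qint i.+1.

(* [2n]_q!! = [2n]_q [2n-2]_q ... [2]_q, [0]_q!! = 1 *)
Definition qdfact2 (n : nat) : R := \prod_(i < n) qint (2 * i.+1).

(* coefficient of t^m in H_q(t) = sum_k (-1)^k q^{k(k-1)} t^{2k} / [2k]_q!! *)
Definition Hq_coef (m : nat) : R :=
  if odd m then 0
  else (-1) ^+ (m./2) * q ^+ (m./2 * (m./2).-1) / qdfact2 (m./2).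

(* H_{n,q}(x): defined by H_q(t) e_q(tx) = sum_n H_{n,q}(x) t^n/[n]_q!
   (identity of formal power series in t), i.e. H_{n,q}(x)/[n]_q! is the
   Cauchy-product coefficient sum_{i+j=n} Hq_coef i * x^j/[j]_q!. *)
Definition qHermite (n : nat) : {poly R} :=
  qfact n *: \sum_(i < n.+1) ((Hq_coef i / qfact (n - i)) *: 'X^(n - i)).

(* q-derivative on polynomials: D_{q,x} x^n = [n]_q x^{n-1} (linearly extended) *)
Definition Dq (p : {poly R}) : {poly R} :=
  \poly_(i < (size p).-1) (qint i.+1 * p`_i.+1).

End QDefs.

(* Main.v *)
Require Import Defs.
From HB Require Import structures.
From mathcomp Require Import all_boot all_order all_algebra.
From mathcomp Require Import zify ring.
Import Order.TTheory GRing.Theory Num.Theory.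
Local Open Scope ring_scope.

Section Aux.
Variable R : realFieldType.
Variable q : R.
Hypothesis hq0 : 0 < q.
Hypothesis hq1 : q < 1.

Lemma oneq_neq0 : 1 - q != 0.
Proof. by rewrite subr_eq0 eq_sym lt_eqF. Qed.

Lemma qint0 : qint q 0 = 0.
Proof. by rewrite /qint expr0 subrr mul0r. Qed.

Lemma qint_neq0 k : (0 < k)%N -> qint q k != 0.
Proof.
move=> hk; rewrite /qint mulf_neq0 ?invr_eq0 ?oneq_neq0 //.
rewrite subr_eq0 eq_sym lt_eqF // exprn_ilt1 ?ltW //; lia.
Qed.

Lemma qfact_neq0 k : qfact q k != 0.
Proof.
elim: k => [|k IH]; first by rewrite /qfact big_ord0 oner_neq0.
by rewrite /qfact big_ord_recr /= mulf_neq0 // qint_neq0.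
Qed.

Lemma qdfact2_neq0 k : qdfact2 q k != 0.
Proof.
elim: k => [|k IH]; first by rewrite /qdfact2 big_ord0 oner_neq0.
by rewrite /qdfact2 big_ord_recr /= mulf_neq0 // qint_neq0 //; lia.
Qed.

Lemma qfactS k : qfact q k.+1 = qfact q k * qint q k.+1.
Proof. by rewrite /qfact big_ord_recr. Qed.

Lemma Hq_odd k : odd k -> Hq_coef q k = 0.
Proof. by rewrite /Hq_coef => ->. Qed.

Lemma Hq_rec d : Hq_coef q d.+2 = - q ^+ d / qint q d.+2 * Hq_coef q d.
Proof.
rewrite /Hq_coef /=; case: (boolP (odd d)) => hd /=; first by rewrite mulr0.
have [k dk] : exists k, d = k.*2 by exists d./2; rewrite -[LHS](odd_double_half d) (negbTE hd).
rewrite dk doubleK /=.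
have -> : k.*2.+2 = (2 * k.+1)%N by lia.
rewrite /qdfact2 big_ord_recr /= exprS.
have -> : (k.+1 * k = k * k.-1 + k.*2)%N by case: k {dk} => // k; lia.
rewrite exprD invfM.
have h1 : qint q (2 * k.+1) != 0 by apply: qint_neq0; lia.
ring.
Qed.

Lemma qint_shift j d :
  qint q (j + d) * q ^+ j - q ^+ (j + d) * qint q j = q ^+ j * qint q d.
Proof.
rewrite /qint exprD; have := oneq_neq0; move: (1 - q) => c hc.
by rewrite !mulrA; ring.
Qed.

Lemma coef_Dq (p : {poly R}) i : (Dq q p)`_i = qint q i.+1 * p`_i.+1.
Proof.
rewrite /Dq coef_poly; case: ltnP => // h.
by rewrite nth_default ?mulr0 //; move: h; case: (size p).
Qed.

Lemma coef_qH n j : (qHermite q n)`_j =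
  if (j <= n)%N then qfact q n * Hq_coef q (n - j) / qfact q j else 0.
Proof.
rewrite /qHermite coefZ coef_sum.
under eq_bigr do rewrite coefZ coefXn.
case: leqP => hj.
  have hi : (n - j < n.+1)%N by lia.
  rewrite (bigD1 (Ordinal hi)) //= big1 ?addr0.
    by rewrite subKn // eqxx mulr1 mulrA.
  move=> i /eqP hne; case: eqP => [e|]; last by rewrite mulr0.
  exfalso; apply: hne; apply: val_inj => /=; have := ltn_ord i; lia.
rewrite big1 ?mulr0 // => i _; case: eqP => [e|]; last by rewrite mulr0.
exfalso; have := ltn_ord i; lia.
Qed.

End Aux.

Theorem theorem11 (R : realFieldType) (q : R) (hq0 : 0 < q) (hq1 : q < 1)
  (n : nat) (x : R) :
  q ^ (n%:Z - 2) * (Dq q (Dq q (qHermite q n))).[x]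
  - x * q ^+ n * (Dq q (qHermite q n)).[x]
  + qint q n * (qHermite q n).[q * x] = 0.
Proof.
set H := qHermite q n.
set S := \poly_(i < n.+1) (q ^+ i * H`_i).
have hsH : (size H <= n.+1)%N.
  apply/(@leq_sizeP _ H n.+1) => j hj; rewrite /H (coef_qH _ _ hq0 hq1); case: leqP => // hjn; lia.
have ES : H.[q * x] = S.[x].
  rewrite (horner_coef_wide _ hsH) (horner_coef_wide _ (size_poly _ _)).
  by apply: eq_bigr => i _; rewrite coef_poly ltn_ord exprMn; ring.
set P := q ^ (n%:Z - 2) *: Dq q (Dq q H) - q ^+ n *: (Dq q H * 'X) + qint q n *: S.
have EP : P.[x] = q ^ (n%:Z - 2) * (Dq q (Dq q H)).[x]
  - x * q ^+ n * (Dq q H).[x] + qint q n * H.[q * x].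
  by rewrite ES /P !hornerE; congr (_ - _ + _); rewrite -[RHS]mulrA [RHS]mulrC.
rewrite -EP.
suff -> : P = 0 by rewrite horner0.
apply/polyP => j; rewrite coef0 /P !coefD coefN !coefZ coefMX !coef_Dq coef_poly.
have -> : (if j == 0%N then 0 else qint q j.-1.+1 * H`_j.-1.+1) = qint q j * H`_j.
  by case: j => [|j]; rewrite ?qint0 ?mul0r.
rewrite /H !(coef_qH _ _ hq0 hq1).
case: (leqP j n) => hj; last first.
  have -> : (j < n.+1)%N = false by lia.
  have -> : (j.+1 < n)%N = false by lia.
  rewrite !mulr0; ring.
have -> : (j < n.+1)%N = true by lia.
have [d nd] : exists d, n = (j + d)%N by exists (n - j)%N; lia.
move: hj; rewrite nd => hj {nd}.
rewrite addKn.
case: d => [|[|d]] in hj *.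
- have -> : (j.+1 < j + 0)%N = false by lia.
  rewrite !mulr0 addn0; ring.
- have -> : (j.+1 < j + 1)%N = false by lia.
  rewrite [Hq_coef q 1]/Hq_coef /= !mulr0 !mul0r; ring.
have -> : (j.+1 < j + d.+2)%N by lia.
have -> : (j + d.+2 - j.+2 = d)%N by lia.
have -> : (j + d.+2)%:Z - 2 = (j + d)%N :> int by lia.
rewrite -exprnP (Hq_rec _ _ hq0 hq1) !qfactS.
have h1 := qfact_neq0 _ _ hq0 hq1 j.
have h2 := qint_neq0 _ _ hq0 hq1 _ (isT : (0 < j.+1)%N).
have h3 := qint_neq0 _ _ hq0 hq1 _ (isT : (0 < j.+2)%N).
have h4 := qint_neq0 _ _ hq0 hq1 _ (isT : (0 < d.+2)%N).
have hs := @qint_shift R q hq1 j d.+2.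
set F := qfact q (j + d.+2).
set A := qint q (j + d.+2) in hs *.
set Q := qint q j in hs *.
rewrite !addnS !exprS in hs *.
set T := Hq_coef q d.
have [->|hT] := eqVneq T 0; first by rewrite !mulr0 !mul0r !mulr0 subrr addr0.
have hqj : q ^+ j != 0 by rewrite expf_neq0 // gt_eqF.
have hA : A = qint q d.+2 + q * q * q ^+ d * Q.
  apply: (mulIf hqj); move: hs; rewrite exprD => hs.
  have -> : A * q ^+ j = q ^+ j * qint q d.+2 + q * (q * (q ^+ j * q ^+ d)) * Q.
    by rewrite -hs; ring.
  ring.
rewrite hA exprD.
field; by rewrite h1 h2 h3 h4.
Qed.
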